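(* Let $S,B\subseteq([-1,1]\cup\{*\})^X$ be real-valued hypothesis classes. For $\eta_1,\eta_2>0$ and $\delta\in(0,1)$, letting $m:=\sup_{r_1,r_2:X\to\mathbb{R}}\mathsf{VC}(S^{(r_1)}_{\eta_1},B^{(r_2)}_{\eta_2})$, \[ \#\mathsf{MC}(S,B,\eta_1\eta_2/3,\delta)\ge\#\mathsf{MA}(S,B,\eta_1\eta_2/3,\delta)\ge\log(1-\delta)+\Omega(m). \] For any $\varepsilon\in(0,1/2)$, taking $\eta_1=\eta_2=\sqrt{3\varepsilon}$, one has $m=\mathsf{fat}_{\sqrt{3\varepsilon}}(S,B)$ and $\#\mathsf{MC}(S,B,\varepsilon,\delta)\ge\#\mathsf{MA}(S,B,\varepsilon,\delta)\ge\log(1-\delta)+\Omega(m)$. Moreover, the constant $3$ may be replaced by any absolute constant $c>2$.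
   Context: $X$ non-empty; distributions discrete. $h^{(r)}_\eta(x)=1$ if $h(x)\ne*$ and $h(x)>r(x)+\eta$, $=-1$ if $h(x)\ne*$ and $h(x)<r(x)-\eta$, $=*$ otherwise; $H^{(r)}_\eta=\{h^{(r)}_\eta:h\in H\}$. $\mathsf{VC}(H_1,H_2)$ for binary classes: sup of $|X'|$ over $X'$ shattered by both. $\mathsf{fat}_\eta(S,B)$: sup of $|X'|$ over $X'$ $\eta$-fat shattered by both $S$ and $B$ (for some $r:X'\to\mathbb{R}$, every $\xi:X'\to\{\pm1\}$ has a member $h$ with $h(x)\ne*$ and $\xi(x)(h(x)-r(x))>\eta$ on $X'$). Generalized product $u_1\diamondsuit u_2=u_1u_2$ if $u_2\in[-1,1]$, $-|u_1|$ if $u_2=*$. $\mathsf{MA\text{-}error}_{\mu,B}(f)=\sup_{b\in B}\sup_{\sigma\in\{\pm1\}}\mathbb{E}_\mu[((f(x)-y)\sigma)\diamondsuit b(x)]$; for $f$ of countable range $V$, $\mathsf{MC\text{-}error}_{\mu,B}(f)=\sup_{b\in B}\sum_{v\in V}\sup_{\sigma}\mathbb{E}_\mu[((f(x)-y)\mathbf{1}(f(x)=v)\sigma)\diamondsuit b(x)]$. $\mathsf{MA}_n(S,B,\varepsilon,\delta)$: learners taking $n$ points of $X\times[-1,1]$ and outputting $f:X\to[-1,1]$ such that for every $\mu$ on $X\times[-1,1]$ with some $s\in S$ satisfying $\Pr_{x\sim\mu|_X}[s(x)\neq*]=1$ and $\mathbb{E}_\mu[y|x]=s(x)$, with probability $\ge1-\delta$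 over $n$ i.i.d. samples, $\mathsf{MA\text{-}error}_{\mu,B}(f)\le\varepsilon$; $\mathsf{MC}_n$ likewise with $\mathsf{MC\text{-}error}$. $\#\mathsf{MA},\#\mathsf{MC}$: least such $n$ ($\infty$ if none). $\log$ is base 2. *)

(* Defs.v *)
From Stdlib Require Import Reals List ClassicalDescription.
From Coquelicot Require Import Coquelicot.
Open Scope R_scope.

Definition ind (P : Prop) : R := if excluded_middle_informative P then 1 else 0.

Definition sgnb (b : bool) : R := if b then 1 else -1.

Definition log2 (x : R) : R := ln x / ln 2.

(* partial real-valued hypotheses: None plays the role of the symbol "*" *)
Definition phyp (X : Type) := X -> option R.
Definition hclass (X : Type) := phyp X -> Prop.

Definition valued {X} (H : hclass X) : Prop :=
  forall h, H h -> forall x v, h x = Some v -> -1 <= v <= 1.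

Definition thr {X} (r : X -> R) (eta : R) (h : phyp X) : X -> option bool :=
  fun x => match h x with
           | Some v => if Rlt_dec (r x + eta) v then Some true
                       else if Rlt_dec v (r x - eta) then Some false else None
           | None => None
           end.

Definition thrcls {X} (H : hclass X) (r : X -> R) (eta : R) : (X -> option bool) -> Prop :=
  fun g => exists h, H h /\ g = thr r eta h.

Definition shatters {X} (C : (X -> option bool) -> Prop) (X' : list X) : Prop :=
  forall xi : X -> bool, exists g, C g /\ forall x, In x X' -> g x = Some (xi x).

Definition VC2 {X} (H1 H2 : (X -> option bool) -> Prop) : Rbar :=
  Rbar_lub (fun z => exists X' : list X, NoDup X' /\ shatters H1 X' /\ shatters H2 X'
                       /\ z = Finite (INR (length X'))).

Definition mVC {X} (S B : hclass X) (eta1 eta2 : R) : Rbar :=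
  Rbar_lub (fun z => exists r1 r2 : X -> R, z = VC2 (thrcls S r1 eta1) (thrcls B r2 eta2)).

Definition fat_shatters {X} (H : hclass X) (eta : R) (X' : list X) : Prop :=
  exists r : X -> R, forall xi : X -> bool, exists h, H h /\
    forall x, In x X' -> exists v, h x = Some v /\ sgnb (xi x) * (v - r x) > eta.

Definition fat {X} (eta : R) (S B : hclass X) : Rbar :=
  Rbar_lub (fun z => exists X' : list X, NoDup X' /\ fat_shatters S eta X'
                       /\ fat_shatters B eta X' /\ z = Finite (INR (length X'))).

(* A discrete distribution on X x [-1,1], given by countably many atoms with
   nonnegative weights summing to 1. *)
Record dist (X : Type) := Dist {
  atom : nat -> X * R;
  wt : nat -> R;
  wt_nonneg : forall i, 0 <= wt i;
  wt_sum : is_series wt 1;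
  atom_y : forall i, -1 <= snd (atom i) <= 1 }.
Arguments atom {X}. Arguments wt {X}.

Definition Ex {X} (mu : dist X) (g : X * R -> R) : R :=
  Series (fun i => wt mu i * g (atom mu i)).

Definition realizable {X} (S : hclass X) (mu : dist X) : Prop :=
  exists s, S s /\
    (forall i, 0 < wt mu i -> s (fst (atom mu i)) <> None) /\
    (forall i, 0 < wt mu i -> forall v, s (fst (atom mu i)) = Some v ->
        Series (fun j => wt mu j * ind (fst (atom mu j) = fst (atom mu i))
                          * (snd (atom mu j) - v)) = 0).

Definition diamond (u : R) (b : option R) : R :=
  match b with Some v => u * v | None => - Rabs u end.

Definition MA_err_le {X} (mu : dist X) (B : hclass X) (f : X -> R) (eps : R) : Prop :=
  forall b, B b -> forall sigma : bool,
    Ex mu (fun p => diamond ((f (fst p) - snd p) * sgnb sigma) (b (fst p))) <= eps.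

Definition MC_term {X} (mu : dist X) (b : phyp X) (f : X -> R) (v : R) : R :=
  Rmax (Ex mu (fun p => diamond ((f (fst p) - snd p) * ind (f (fst p) = v) * sgnb true) (b (fst p))))
       (Ex mu (fun p => diamond ((f (fst p) - snd p) * ind (f (fst p) = v) * sgnb false) (b (fst p)))).

(* The sum over v in the range V of f is taken over
   the values f attains on the atoms of mu, each counted once (first occurrence);
   the summands for other v in V vanish identically. *)
Definition MC_err_le {X} (mu : dist X) (B : hclass X) (f : X -> R) (eps : R) : Prop :=
  forall b, B b ->
    Series (fun k => ind (forall j, (j < k)%nat -> f (fst (atom mu j)) <> f (fst (atom mu k)))
                     * MC_term mu b f (f (fst (atom mu k)))) <= eps.

Definition learner (X : Type) := list (X * R) -> (X -> R).

Definition sumR (l : list R) : R := fold_right Rplus 0 l.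
Definition prodR (l : list R) : R := fold_right Rmult 1 l.

(* with probability >= 1 - delta over n i.i.d. samples from mu, good (L sample):
   the probability of the bad event (a countable sum over index tuples) is <= delta,
   i.e. every finite sub-sum is <= delta. *)
Definition whp {X} (mu : dist X) (n : nat) (delta : R) (L : learner X)
    (good : (X -> R) -> Prop) : Prop :=
  forall F : list (list nat), NoDup F -> (forall t, In t F -> length t = n) ->
    sumR (map (fun t => ind (~ good (L (map (atom mu) t))) * prodR (map (wt mu) t)) F)
      <= delta.

Definition outputs_bounded {X} (L : learner X) : Prop :=
  forall smp x, -1 <= L smp x <= 1.

Definition MA_learner {X} (S B : hclass X) (eps delta : R) (n : nat) (L : learner X) : Prop :=
  outputs_bounded L /\
  forall mu : dist X, realizable S mu -> whp mu n delta L (fun f => MA_err_le mu B f eps).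

Definition MC_learner {X} (S B : hclass X) (eps delta : R) (n : nat) (L : learner X) : Prop :=
  outputs_bounded L /\
  (forall smp, exists e : nat -> R, forall x, exists k, L smp x = e k) /\
  forall mu : dist X, realizable S mu -> whp mu n delta L (fun f => MC_err_le mu B f eps).

(* least n (as an extended real; +oo if none) *)
Definition least (P : nat -> Prop) : Rbar :=
  Glb_Rbar (fun r => exists n : nat, P n /\ r = INR n).

Definition sharpMA {X} (S B : hclass X) (eps delta : R) : Rbar :=
  least (fun n => exists L, MA_learner S B eps delta n L).
Definition sharpMC {X} (S B : hclass X) (eps delta : R) : Rbar :=
  least (fun n => exists L, MC_learner S B eps delta n L).

(* Main.v *)
Require Import Defs.
From Stdlib Require Import Reals List Lia Lra Psatz ClassicalDescription Classical_Prop Classical_Pred_Type Arith.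
From Coquelicot Require Import Coquelicot.
Open Scope R_scope.

Definition fsum (N : nat) (a : nat -> R) : R := sumR (map a (seq 0 N)).

Lemma sumR_app l1 l2 : sumR (l1 ++ l2) = sumR l1 + sumR l2.
Proof. induction l1; simpl; [lra|rewrite IHl1; lra]. Qed.

Lemma fsum_S N a : fsum (S N) a = fsum N a + a N.
Proof. unfold fsum. rewrite seq_S, map_app, sumR_app. simpl. lra. Qed.

Lemma fsum_0 a : fsum 0 a = 0.
Proof. reflexivity. Qed.

Lemma fsum_ext N a b : (forall j, (j < N)%nat -> a j = b j) -> fsum N a = fsum N b.
Proof. induction N; intros H; [reflexivity|]. rewrite !fsum_S, IHN, H; auto. Qed.

Lemma fsum_plus N a b : fsum N (fun j => a j + b j) = fsum N a + fsum N b.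
Proof. induction N; [unfold fsum; simpl; lra|]. rewrite !fsum_S, IHN; lra. Qed.

Lemma fsum_scal N k a : fsum N (fun j => k * a j) = k * fsum N a.
Proof. induction N; [unfold fsum; simpl; lra|]. rewrite !fsum_S, IHN; lra. Qed.

Lemma fsum_le N a b : (forall j, (j < N)%nat -> a j <= b j) -> fsum N a <= fsum N b.
Proof. induction N; intros H; [unfold fsum; simpl; lra|]. rewrite !fsum_S.
  assert (fsum N a <= fsum N b) by (apply IHN; auto). specialize (H N). assert (a N <= b N) by (apply H; lia). lra. Qed.

Lemma fsum_double N a : fsum (2 * N) a = fsum N (fun j => a (2 * j)%nat + a (2 * j + 1)%nat).
Proof. induction N; [reflexivity|].
  replace (2 * S N)%nat with (S (S (2 * N))) by lia.
  rewrite !fsum_S, IHN. replace (S (2 * N)) with (2 * N + 1)%nat by lia. lra. Qed.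

Lemma sumR_map_le {A} (l : list A) g h : (forall t, In t l -> g t <= h t) ->
  sumR (map g l) <= sumR (map h l).
Proof. induction l; simpl; intros H; [lra|].
  assert (g a <= h a) by auto. assert (sumR (map g l) <= sumR (map h l)) by auto. lra. Qed.

Lemma sumR_map_plus {A} (l : list A) g h :
  sumR (map (fun t => g t + h t) l) = sumR (map g l) + sumR (map h l).
Proof. induction l; simpl; [lra|rewrite IHl; lra]. Qed.

Lemma sumR_map_scal {A} (l : list A) k g :
  sumR (map (fun t => k * g t) l) = k * sumR (map g l).
Proof. induction l; simpl; [lra|rewrite IHl; lra]. Qed.

Lemma sumR_map_const {A} (l : list A) k :
  sumR (map (fun _ => k) l) = INR (length l) * k.
Proof. induction l; simpl length; [simpl; lra|]. rewrite S_INR. simpl. rewrite IHl. lra. Qed.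

Lemma sumR_map_ext {A} (l : list A) g h : (forall t, In t l -> g t = h t) ->
  sumR (map g l) = sumR (map h l).
Proof. induction l; simpl; intros H; [lra|]. rewrite H, IHl; auto. Qed.

Lemma sumR_swap {A B} (la : list A) (lb : list B) (G : A -> B -> R) :
  sumR (map (fun a => sumR (map (fun b => G a b) lb)) la) =
  sumR (map (fun b => sumR (map (fun a => G a b) la)) lb).
Proof. induction la; simpl.
  - induction lb; simpl; [lra| rewrite <- IHlb; lra].
  - rewrite IHla. rewrite <- sumR_map_plus. reflexivity. Qed.

Lemma sumR_map_flat {A B} (l : list A) (g : A -> list B) (h : B -> R) :
  sumR (map h (flat_map g l)) = sumR (map (fun a => sumR (map h (g a))) l).
Proof. induction l; simpl; [reflexivity|]. rewrite map_app, sumR_app, IHl. reflexivity. Qed.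

Fixpoint tuples (n N : nat) : list (list nat) :=
  match n with
  | O => nil :: nil
  | S n' => flat_map (fun i => map (cons i) (tuples n' N)) (seq 0 N)
  end.

Lemma tuples_length n N t : In t (tuples n N) -> length t = n.
Proof. revert t; induction n; simpl; intros t H.
  - destruct H as [<-|[]]; reflexivity.
  - apply in_flat_map in H. destruct H as [i [_ H]]. apply in_map_iff in H.
    destruct H as [t' [<- H]]. simpl. f_equal. auto. Qed.

Lemma tuples_len n N : length (tuples n N) = (N ^ n)%nat.
Proof. induction n; simpl; [reflexivity|].
  assert (forall l : list nat, length (flat_map (fun i => map (cons i) (tuples n N)) l) = (length l * N ^ n)%nat).
  { induction l; simpl; [reflexivity|]. rewrite length_app, length_map, IHl, IHn. lia. }
  rewrite H, length_seq. lia. Qed.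

Lemma tuples_nodup n N : NoDup (tuples n N).
Proof. induction n; simpl.
  - constructor; [simpl; tauto|constructor].
  - assert (forall s l : nat, NoDup (flat_map (fun i => map (cons i) (tuples n N)) (seq s l))).
    { clear -IHn. intros s l. revert s. induction l; intros s; simpl; [constructor|].
      apply NoDup_app.
      + apply NoDup_map_NoDup_ForallPairs; auto. intros x y _ _ H; injection H; auto.
      + apply IHl.
      + intros t H1 H2. apply in_map_iff in H1. destruct H1 as [t1 [<- _]].
        apply in_flat_map in H2. destruct H2 as [i [Hi H2]]. apply in_map_iff in H2.
        destruct H2 as [t2 [E _]]. injection E; intros; subst. apply in_seq in Hi. lia. }
    apply H. Qed.

Lemma tuples_prod n N (w : nat -> R) :
  sumR (map (fun t => prodR (map w t)) (tuples n N)) = (fsum N w) ^ n.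
Proof. induction n; simpl; [lra|].
  rewrite sumR_map_flat. rewrite <- IHn. unfold fsum. rewrite Rmult_comm. rewrite <- (sumR_map_scal (seq 0 N)).
  apply sumR_map_ext. intros i _. rewrite map_map. simpl.
  rewrite Rmult_comm, <- sumR_map_scal. apply sumR_map_ext. intros; lra. Qed.

Lemma prodR_le n (w : nat -> R) K t : length t = n -> (forall i, 0 <= w i <= K) ->
  0 <= prodR (map w t) <= K ^ n.
Proof. revert n; induction t; intros n Hl H; simpl in *; subst; simpl; [lra|].
  destruct (IHt (length t) eq_refl H). specialize (H a). split; [nra|].
  apply Rmult_le_compat; lra. Qed.

Definition upd (beta : nat -> bool) (d : nat) (b : bool) : nat -> bool :=
  fun j => if Nat.eqb j d then b else beta j.

Fixpoint allf (d : nat) : list (nat -> bool) :=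
  match d with
  | O => (fun _ => false) :: nil
  | S d' => map (fun be => upd be d' true) (allf d') ++ map (fun be => upd be d' false) (allf d')
  end.

Lemma allf_len d : length (allf d) = (2 ^ d)%nat.
Proof. induction d; simpl; [reflexivity|]. rewrite length_app, !length_map, IHd. lia. Qed.

Definition nb (b1 b2 : bool) : nat := if Bool.eqb b1 b2 then 0%nat else 1%nat.

Fixpoint distn (d : nat) (beta w : nat -> bool) : nat :=
  match d with
  | O => 0%nat
  | S d' => (distn d' beta w + nb (beta d') (w d'))%nat
  end.

Lemma distn_ext d b1 b2 w : (forall j, (j < d)%nat -> b1 j = b2 j) -> distn d b1 w = distn d b2 w.
Proof. induction d; simpl; intros H; [reflexivity|]. rewrite IHd, H; auto. Qed.

Lemma distn_fsum d beta w : INR (distn d beta w) = fsum d (fun j => INR (nb (beta j) (w j))).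
Proof. induction d; [reflexivity|]. simpl distn. rewrite plus_INR, fsum_S, IHd. reflexivity. Qed.

Lemma allf_pow d (w : nat -> bool) (tau : R) :
  sumR (map (fun be => tau ^ (distn d be w)) (allf d)) = (1 + tau) ^ d.
Proof. induction d; simpl; [lra|].
  rewrite map_app, sumR_app, !map_map.
  assert (E : forall b, sumR (map (fun x => tau ^ (distn d (upd x d b) w + nb (upd x d b d) (w d))) (allf d))
     = tau ^ (nb b (w d)) * (1 + tau) ^ d).
  { intros b. rewrite <- IHd, <- sumR_map_scal. apply sumR_map_ext. intros be _.
    rewrite (distn_ext d (upd be d b) be). 2:{ intros j Hj. unfold upd.
      destruct (Nat.eqb_spec j d); [lia|reflexivity]. }
    replace (upd be d b d) with b by (unfold upd; rewrite Nat.eqb_refl; reflexivity). rewrite pow_add. lra. }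
  rewrite !E. destruct (w d); simpl; lra. Qed.

Lemma sum_n_fsum a n : sum_n a n = fsum (S n) a.
Proof. induction n.
  - rewrite sum_O. unfold fsum; simpl. lra.
  - rewrite sum_Sn, IHn, (fsum_S (S n)). reflexivity. Qed.

Lemma fsum_stable a N m : (forall k, (N <= k)%nat -> a k = 0) -> (N <= m)%nat -> fsum m a = fsum N a.
Proof. intros H Hm. induction Hm; [reflexivity|]. rewrite fsum_S, IHHm, H; [lra|lia]. Qed.

Lemma series_fin (a : nat -> R) N : (forall k, (N <= k)%nat -> a k = 0) -> is_series a (fsum N a).
Proof. intros H. unfold is_series.
  apply filterlim_ext_loc with (fun _ => fsum N a).
  - exists N. intros n Hn. rewrite sum_n_fsum. symmetry. apply fsum_stable; auto.
  - apply filterlim_const. Qed.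

Lemma Series_fin (a : nat -> R) N : (forall k, (N <= k)%nat -> a k = 0) -> Series a = fsum N a.
Proof. intros H. apply is_series_unique, series_fin, H. Qed.

Lemma fsum_zero N a : (forall j, (j < N)%nat -> a j = 0) -> fsum N a = 0.
Proof. intros H. rewrite (fsum_ext N a (fun j => 0 * 0)), fsum_scal; [lra|]. intros; rewrite H; auto; lra. Qed.

Definition sg (i : nat) : R := if Nat.even i then 1 else -1.

Definition atom0 {X} (x0 : X) (l : list X) (i : nat) : X * R :=
  if Nat.ltb i (2 * length l) then (nth (Nat.div2 i) l x0, sg i) else (x0, 0).

Definition wt0 (d : nat) (v : nat -> R) (i : nat) : R :=
  if Nat.ltb i (2 * d) then (1 + sg i * v (Nat.div2 i)) / (2 * INR d) else 0.

Lemma atom0_even {X} (x0 : X) l k : (k < length l)%nat -> atom0 x0 l (2 * k) = (nth k l x0, 1).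
Proof. intros H. unfold atom0. destruct (Nat.ltb_spec (2*k) (2 * length l)); [|lia].
  rewrite Nat.div2_double. unfold sg. rewrite Nat.even_even. reflexivity. Qed.

Lemma atom0_odd {X} (x0 : X) l k : (k < length l)%nat -> atom0 x0 l (2 * k + 1) = (nth k l x0, -1).
Proof. intros H. unfold atom0. destruct (Nat.ltb_spec (2*k+1) (2 * length l)); [|lia].
  rewrite Nat.div2_odd'. unfold sg. rewrite Nat.even_odd. reflexivity. Qed.

Lemma wt0_even d v k : (k < d)%nat -> wt0 d v (2 * k) = (1 + v k) / (2 * INR d).
Proof. intros H. unfold wt0. destruct (Nat.ltb_spec (2*k) (2 * d)); [|lia].
  rewrite Nat.div2_double. unfold sg. rewrite Nat.even_even. f_equal; lra. Qed.

Lemma wt0_odd d v k : (k < d)%nat -> wt0 d v (2 * k + 1) = (1 - v k) / (2 * INR d).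
Proof. intros H. unfold wt0. destruct (Nat.ltb_spec (2*k+1) (2 * d)); [|lia].
  rewrite Nat.div2_odd'. unfold sg. rewrite Nat.even_odd. f_equal; lra. Qed.

Lemma wt0_big d v i : (2 * d <= i)%nat -> wt0 d v i = 0.
Proof. intros H. unfold wt0. destruct (Nat.ltb_spec i (2 * d)); [lia|reflexivity]. Qed.

Lemma wt0_bounds d v i : (0 < d)%nat -> (forall j, -1 <= v j <= 1) -> 0 <= wt0 d v i <= / INR d.
Proof. intros Hd Hv. assert (0 < INR d) by (apply lt_0_INR; lia).
  unfold wt0. destruct (Nat.ltb i (2 * d)).
  - specialize (Hv (Nat.div2 i)). unfold sg. destruct (Nat.even i);
    split; unfold Rdiv; [apply Rmult_le_pos; [lra|]| |apply Rmult_le_pos; [lra|]|];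
    try (left; apply Rinv_0_lt_compat; lra);
    replace (/ INR d) with (2 * / (2 * INR d)) by (field; lra);
    apply Rmult_le_compat_r; try (left; apply Rinv_0_lt_compat; lra); lra.
  - split; [lra|left; apply Rinv_0_lt_compat; lra]. Qed.

Lemma wt0_sum d v : (0 < d)%nat -> is_series (wt0 d v) 1.
Proof. intros Hd. assert (0 < INR d) by (apply lt_0_INR; lia).
  replace 1 with (fsum (2 * d) (wt0 d v)).
  - apply series_fin. intros; apply wt0_big; auto.
  - rewrite fsum_double. rewrite (fsum_ext d _ (fun _ => / INR d)).
    + replace (/ INR d) with (/ INR d * 1) by lra. rewrite fsum_scal.
      replace (fsum d (fun _ => 1)) with (INR d). field; lra.
      clear. induction d; [reflexivity|]. rewrite fsum_S, S_INR, IHd. reflexivity.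
    + intros j Hj. rewrite wt0_even, wt0_odd; auto. field; lra. Qed.

Lemma atom0_y {X} (x0 : X) l i : -1 <= snd (atom0 x0 l i) <= 1.
Proof. unfold atom0. destruct (Nat.ltb i (2 * length l)); simpl; [unfold sg; destruct (Nat.even i)|]; lra. Qed.

Definition mkdist {X} (x0 : X) (l : list X) (v : nat -> R) (Hd : (0 < length l)%nat)
  (Hv : forall j, -1 <= v j <= 1) : Defs.dist X :=
  Dist X (atom0 x0 l) (wt0 (length l) v)
    (fun i => proj1 (wt0_bounds (length l) v i Hd Hv)) (wt0_sum (length l) v Hd) (atom0_y x0 l).

Lemma Ex_mk {X} (x0 : X) l v Hd Hv (G : X -> option R) (U : nat -> R) (f : X -> R) (sigma : bool) :
  (forall j, (j < length l)%nat -> G (nth j l x0) = Some (U j)) ->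
  Ex (mkdist x0 l v Hd Hv) (fun p => diamond ((f (fst p) - snd p) * sgnb sigma) (G (fst p)))
  = fsum (length l) (fun j => sgnb sigma * U j * (f (nth j l x0) - v j) / INR (length l)).
Proof. intros HG. assert (0 < INR (length l)) by (apply lt_0_INR; lia).
  unfold Ex. simpl. rewrite (Series_fin _ (2 * length l)).
  - rewrite fsum_double. apply fsum_ext. intros j Hj.
    rewrite atom0_even, atom0_odd, wt0_even, wt0_odd; auto. simpl. rewrite HG; auto. simpl.
    field. lra.
  - intros k Hk. rewrite wt0_big; auto. lra. Qed.

Definition liftb {X} (x0 : X) (l : list X) (z : nat -> bool) (x : X) : bool :=
  if excluded_middle_informative (exists j, (j < length l)%nat /\ nth j l x0 = x /\ z j = true)
  then true else false.

Lemma liftb_nth {X} (x0 : X) l z j : NoDup l -> (j < length l)%nat -> liftb x0 l z (nth j l x0) = z j.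
Proof. intros Hn Hj. unfold liftb. destruct excluded_middle_informative as [[k [Hk [E Z]]]|N].
  - rewrite NoDup_nth in Hn. apply Hn in E; auto. subst. auto.
  - destruct (z j) eqn:Z; auto. exfalso; apply N. exists j; auto. Qed.

Lemma shat_get {X} (H : hclass X) r eta l x0 z : NoDup l -> shatters (thrcls H r eta) l ->
  exists h, H h /\ forall j, (j < length l)%nat -> thr r eta h (nth j l x0) = Some (z j).
Proof. intros Hn Hs. destruct (Hs (liftb x0 l z)) as [g [[h [Hh ->]] Hg]].
  exists h. split; auto. intros j Hj. rewrite Hg by (apply nth_In; auto). f_equal. apply liftb_nth; auto. Qed.

Lemma thr_some {X} r eta (h : phyp X) x b : thr r eta h x = Some b ->
  exists u, h x = Some u /\ (if b then r x + eta < u else u < r x - eta).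
Proof. unfold thr. destruct (h x) as [u|]; [|discriminate].
  destruct (Rlt_dec (r x + eta) u); intros E; [injection E; intros <-; eauto|].
  destruct (Rlt_dec u (r x - eta)); [injection E; intros <-; eauto|discriminate]. Qed.

Definition oval (o : option R) : R := match o with Some u => u | None => 0 end.

Lemma idx_cases d i : (i < 2 * d)%nat -> exists k, (k < d)%nat /\ (i = 2 * k \/ i = 2 * k + 1)%nat.
Proof. intros H. destruct (Nat.Even_or_Odd i) as [[k ->]|[k ->]]; exists k; split; lia. Qed.

Lemma real_mk {X} (S : hclass X) x0 l s v Hd Hv : S s -> NoDup l ->
  (forall j, (j < length l)%nat -> s (nth j l x0) = Some (v j)) ->
  realizable S (mkdist x0 l v Hd Hv).
Proof. intros Hs Hn Hsv. assert (0 < INR (length l)) by (apply lt_0_INR; lia).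
  exists s. split; auto. split.
  - intros i Hi. simpl in *. destruct (Nat.ltb_spec i (2 * length l)) as [Hlt|Hge];
      [|rewrite wt0_big in Hi by lia; lra].
    destruct (idx_cases _ _ Hlt) as [k [Hk [-> | ->]]];
      [rewrite atom0_even|rewrite atom0_odd]; auto; simpl; rewrite Hsv; auto; discriminate.
  - intros i Hi u Hu. simpl in *. destruct (Nat.ltb_spec i (2 * length l)) as [Hlt|Hge];
      [|rewrite wt0_big in Hi by lia; lra].
    assert (Hk' : exists k, (k < length l)%nat /\ fst (atom0 x0 l i) = nth k l x0).
    { destruct (idx_cases _ _ Hlt) as [k [Hk [-> | ->]]]; exists k;
      [rewrite atom0_even|rewrite atom0_odd]; auto. }
    destruct Hk' as [k [Hk E]]. rewrite E in *. rewrite Hsv in Hu by auto. injection Hu; intros <-.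
    rewrite (Series_fin _ (2 * length l)).
    + rewrite fsum_double. apply fsum_zero. intros j Hj.
      rewrite atom0_even, atom0_odd, wt0_even, wt0_odd by auto. simpl.
      unfold Defs.ind. destruct excluded_middle_informative as [E2|E2].
      * rewrite NoDup_nth in Hn. apply Hn in E2; auto. subst. field. lra.
      * lra.
    + intros m Hm. rewrite wt0_big; auto. lra. Qed.

Definition wf {X} (r1 : X -> R) (x0 : X) (l : list X) (f : X -> R) (j : nat) : bool :=
  if Rlt_dec (r1 (nth j l x0)) (f (nth j l x0)) then true else false.

Lemma pt (r1 f v e1 r2 e2 U1 U2 : R) (bt : bool) : 0 < e1 -> 0 < e2 ->
  (if bt then r1 + e1 < v else v < r1 - e1) ->
  (if Rlt_dec v f then r2 + e2 < U1 /\ U2 < r2 - e2 else U1 < r2 - e2 /\ r2 + e2 < U2) ->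
  2 * e1 * e2 * INR (nb bt (if Rlt_dec r1 f then true else false)) <= (U1 - U2) * (f - v).
Proof. intros H1 H2 Hb Hz.
  destruct (Rlt_dec v f) as [L1|L1]; destruct (Rlt_dec r1 f) as [L2|L2]; destruct bt;
  unfold nb; simpl Bool.eqb; cbv iota; simpl INR; destruct Hz; nra. Qed.

Lemma aux (K N U1 U2 w D : R) : 0 < D -> K * N <= (U1 - U2) * w ->
  K / D * N <= sgnb true * U1 * w / D + sgnb false * U2 * w / D.
Proof. intros HD H. simpl.
  replace (K / D * N) with (K * N * / D) by (field; lra).
  replace (1 * U1 * w / D + -1 * U2 * w / D) with ((U1 - U2) * w * / D) by (field; lra).
  apply Rmult_le_compat_r; auto. left; apply Rinv_0_lt_compat; auto. Qed.

Lemma good_dist {X} (B : hclass X) x0 l v Hd Hv (r1 r2 : X -> R) e1 e2 c (beta : nat -> bool) f :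
  NoDup l -> 0 < e1 -> 0 < e2 -> 0 < c -> shatters (thrcls B r2 e2) l ->
  (forall j, (j < length l)%nat -> if beta j then r1 (nth j l x0) + e1 < v j else v j < r1 (nth j l x0) - e1) ->
  MA_err_le (mkdist x0 l v Hd Hv) B f (e1 * e2 / c) ->
  INR (distn (length l) beta (wf r1 x0 l f)) <= INR (length l) / c.
Proof. intros Hn He1 He2 Hc Hsh Hb HMA.
  set (d := length l) in *. assert (Hd' : 0 < INR d) by (apply lt_0_INR; lia).
  set (z := fun j => if Rlt_dec (v j) (f (nth j l x0)) then true else false).
  destruct (shat_get B r2 e2 l x0 z Hn Hsh) as [b1 [HB1 T1]].
  destruct (shat_get B r2 e2 l x0 (fun j => negb (z j)) Hn Hsh) as [b2 [HB2 T2]].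
  set (U1 := fun j => oval (b1 (nth j l x0))). set (U2 := fun j => oval (b2 (nth j l x0))).
  assert (G1 : forall j, (j < d)%nat -> b1 (nth j l x0) = Some (U1 j) /\
     (if z j then r2 (nth j l x0) + e2 < U1 j else U1 j < r2 (nth j l x0) - e2)).
  { intros j Hj. destruct (thr_some _ _ _ _ _ (T1 j Hj)) as [u [E P]]. unfold U1. rewrite E. auto. }
  assert (G2 : forall j, (j < d)%nat -> b2 (nth j l x0) = Some (U2 j) /\
     (if negb (z j) then r2 (nth j l x0) + e2 < U2 j else U2 j < r2 (nth j l x0) - e2)).
  { intros j Hj. destruct (thr_some _ _ _ _ _ (T2 j Hj)) as [u [E P]]. unfold U2. rewrite E. auto. }
  pose proof (HMA b1 HB1 true) as E1. pose proof (HMA b2 HB2 false) as E2.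
  rewrite (Ex_mk x0 l v Hd Hv b1 U1) in E1 by (intros j Hj; apply G1; auto).
  rewrite (Ex_mk x0 l v Hd Hv b2 U2) in E2 by (intros j Hj; apply G2; auto).
  fold d in E1, E2.
  assert (Hsum : fsum d (fun j => (2 * e1 * e2 / INR d) * INR (nb (beta j) (wf r1 x0 l f j)))
     <= e1 * e2 / c + e1 * e2 / c).
  { eapply Rle_trans; [|apply Rplus_le_compat; [exact E1|exact E2]]. rewrite <- fsum_plus.
    apply fsum_le. intros j Hj. destruct (G1 j Hj) as [_ P1]. destruct (G2 j Hj) as [_ P2].
    pose proof (pt (r1 (nth j l x0)) (f (nth j l x0)) (v j) e1 (r2 (nth j l x0)) e2 (U1 j) (U2 j) (beta j)
      He1 He2 (Hb j Hj)) as Q.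
    unfold z in P1, P2. destruct (Rlt_dec (v j) (f (nth j l x0))); simpl in P1, P2.
    - specialize (Q (conj P1 P2)). unfold wf.
      apply aux; auto.
    - specialize (Q (conj P1 P2)). unfold wf.
      apply aux; auto. }
  rewrite fsum_scal, <- distn_fsum in Hsum.
  assert (0 < 2 * e1 * e2 / INR d) by (apply Rdiv_lt_0_compat; nra).
  apply Rmult_le_reg_l with (2 * e1 * e2 / INR d); auto.
  replace (2 * e1 * e2 / INR d * (INR d / c)) with (e1 * e2 / c + e1 * e2 / c) by (field; lra).
  exact Hsum. Qed.

Lemma sumR_map_minus {A} (l : list A) g h :
  sumR (map (fun t => g t - h t) l) = sumR (map g l) - sumR (map h l).
Proof. induction l; simpl; [lra|rewrite IHl; lra]. Qed.

Lemma ind_01 P : 0 <= Defs.ind P <= 1.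
Proof. unfold Defs.ind; destruct excluded_middle_informative; lra. Qed.

Lemma per_beta {X} (S B : hclass X) x0 l (r1 r2 : X -> R) e1 e2 c delta n (L : learner X)
  (beta : nat -> bool) (Hd : (0 < length l)%nat) :
  valued S -> NoDup l -> 0 < e1 -> 0 < e2 -> 0 < c ->
  shatters (thrcls S r1 e1) l -> shatters (thrcls B r2 e2) l ->
  MA_learner S B (e1 * e2 / c) delta n L ->
  1 - delta <= sumR (map (fun t => Defs.ind (INR (distn (length l) beta
      (wf r1 x0 l (L (map (atom0 x0 l) t)))) <= INR (length l) / c) * (/ INR (length l)) ^ n)
      (tuples n (2 * length l))).
Proof. intros HvS Hn He1 He2 Hc HshS HshB HL.
  assert (HdR : 0 < INR (length l)) by (apply lt_0_INR; lia).
  destruct (shat_get S r1 e1 l x0 beta Hn HshS) as [s [Hs Ts]].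
  set (v := fun j => oval (s (nth j l x0))).
  assert (Hv : forall j, -1 <= v j <= 1).
  { intros j. unfold v, oval. destruct (s (nth j l x0)) eqn:E; [apply (HvS s Hs _ _ E)|lra]. }
  assert (Hsv : forall j, (j < length l)%nat -> s (nth j l x0) = Some (v j) /\
     (if beta j then r1 (nth j l x0) + e1 < v j else v j < r1 (nth j l x0) - e1)).
  { intros j Hj. destruct (thr_some _ _ _ _ _ (Ts j Hj)) as [u [E P]]. unfold v. rewrite E. auto. }
  set (mu := mkdist x0 l v Hd Hv).
  assert (Hreal : realizable S mu) by (apply (real_mk S x0 l s); auto; intros j Hj; apply Hsv; auto).
  destruct HL as [_ HL].
  specialize (HL mu Hreal (tuples n (2 * length l)) (tuples_nodup _ _)
    (fun t H => tuples_length _ _ t H)).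
  assert (Hone : sumR (map (fun t => prodR (map (wt mu) t)) (tuples n (2 * length l))) = 1).
  { rewrite tuples_prod. simpl wt.
    replace (fsum (2 * length l) (wt0 (length l) v)) with 1. apply pow1.
    rewrite <- (Series_fin _ (2 * length l)). symmetry. apply is_series_unique, wt0_sum; auto.
    intros; apply wt0_big; auto. }
  eapply Rle_trans; [|apply sumR_map_le with
    (g := fun t => prodR (map (wt mu) t) - Defs.ind (~ MA_err_le mu B (L (map (atom mu) t)) (e1 * e2 / c))
       * prodR (map (wt mu) t))].
  - rewrite sumR_map_minus, Hone. lra.
  - intros t Ht. pose proof (tuples_length _ _ t Ht) as Hlt.
    assert (HP : 0 <= prodR (map (wt mu) t) <= (/ INR (length l)) ^ n).
    { apply prodR_le; auto. intros i. apply wt0_bounds; auto. }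
    set (Pg := MA_err_le mu B (L (map (atom mu) t)) (e1 * e2 / c)).
    set (Pd := INR (distn (length l) beta (wf r1 x0 l (L (map (atom0 x0 l) t)))) <= INR (length l) / c).
    unfold Defs.ind. destruct (excluded_middle_informative (~ Pg)) as [NG|G].
    + destruct (excluded_middle_informative Pd); assert (0 <= (/ INR (length l)) ^ n) by lra; lra.
    + apply NNPP in G. destruct (excluded_middle_informative Pd) as [PD|ND]; [lra|].
      elim ND. unfold Pd. apply (good_dist B x0 l v Hd Hv r1 r2 e1 e2 c beta); auto.
      intros j Hj; apply Hsv; auto. Qed.

Definition tauc (c : R) := / 2 + / c.
Definition Cc (c : R) := (ln 2 - ln (1 + tauc c) + ln (tauc c) / c) / ln 2.

Lemma ln_le_x1 x : 0 < x -> ln x <= x - 1.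
Proof. intros H. pose proof (exp_ineq1_le (ln x)). rewrite exp_ln in H0; auto. lra. Qed.

Lemma ln2_pos : 0 < ln 2.
Proof. rewrite <- ln_1. apply ln_increasing; lra. Qed.

Lemma Cc_pos c : 2 < c -> 0 < Cc c.
Proof. intros Hc. unfold Cc, tauc. set (t := / 2 + / c).
  assert (Hic : 0 < / c < / 2) by (split; [apply Rinv_0_lt_compat; lra| apply Rinv_lt_contravar; lra]).
  assert (Ht : / 2 < t < 1) by (unfold t; lra).
  assert (H1 : ln (1 + t) = ln 2 + ln ((1 + t) / 2)).
  { rewrite <- ln_mult by lra. f_equal. field. }
  assert (H2 : ln ((1 + t) / 2) <= (1 + t) / 2 - 1) by (apply ln_le_x1; lra).
  assert (H3 : ln (/ t) <= / t - 1) by (apply ln_le_x1; apply Rinv_0_lt_compat; lra).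
  rewrite ln_Rinv in H3 by lra.
  assert (Hct : c * t = c / 2 + 1) by (unfold t; field; lra).
  assert (0 < ln 2 - ln (1 + t) + ln t / c).
  { rewrite H1.
    assert (ln t / c >= (1 - / t) / c).
    { unfold Rdiv. apply Rle_ge, Rmult_le_compat_r; [lra|lra]. }
    assert ((1 - / t) / c = - ((1 - t) / (c * t))) by (field; lra).
    assert ((1 - t) / (c * t) < (1 - t) / 2).
    { rewrite Hct. unfold Rdiv. apply Rmult_lt_compat_l; [lra|]. apply Rinv_lt_contravar; lra. }
    lra. }
  apply Rdiv_lt_0_compat; auto. apply ln2_pos. Qed.

Lemma ind_pow (k : nat) (Dd t : R) : 0 < t < 1 ->
  Defs.ind (INR k <= Dd) <= t ^ k * / exp (Dd * ln t).
Proof. intros Ht. assert (0 < / exp (Dd * ln t)) by (apply Rinv_0_lt_compat, exp_pos).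
  unfold Defs.ind. destruct excluded_middle_informative as [Hi|Hi].
  - rewrite <- Rpower_pow by lra. unfold Rpower.
    assert (Hl : ln t < 0) by (rewrite <- ln_1; apply ln_increasing; lra).
    assert (Hle : exp (Dd * ln t) <= exp (INR k * ln t)).
    { destruct (Rle_lt_or_eq_dec (Dd * ln t) (INR k * ln t)); [nra| |].
      - left; apply exp_increasing; auto.
      - rewrite e; lra. }
    pose proof (exp_pos (Dd * ln t)).
    replace 1 with (exp (Dd * ln t) * / exp (Dd * ln t)) by (field; lra).
    apply Rmult_le_compat_r; lra.
  - pose proof (pow_lt t k). nra. Qed.

Lemma core {X} (S B : hclass X) (x0 : X) l (r1 r2 : X -> R) e1 e2 c delta n (L : learner X) :
  valued S -> NoDup l -> 0 < e1 -> 0 < e2 -> 2 < c -> 0 < delta < 1 ->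
  shatters (thrcls S r1 e1) l -> shatters (thrcls B r2 e2) l ->
  MA_learner S B (e1 * e2 / c) delta n L ->
  log2 (1 - delta) + Cc c * INR (length l) <= INR n.
Proof. intros HvS Hn He1 He2 Hc Hdel HshS HshB HL.
  pose proof ln2_pos as Hl2.
  assert (Hld : ln (1 - delta) < 0) by (rewrite <- ln_1; apply ln_increasing; lra).
  destruct (length l) as [|d0] eqn:Hlen.
  { unfold log2. simpl INR. pose proof (pos_INR n).
    assert (ln (1 - delta) / ln 2 < 0). { unfold Rdiv. apply Rmult_neg_pos; auto. apply Rinv_0_lt_compat; auto. }
    lra. }
  assert (Hd : (0 < length l)%nat) by lia. rewrite <- Hlen. clear d0 Hlen.
  set (d := length l). assert (HdR : 0 < INR d) by (apply lt_0_INR; lia).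
  set (t := tauc c).
  assert (Ht : 0 < t < 1).
  { unfold t, tauc. assert (0 < / c < / 2) by (split; [apply Rinv_0_lt_compat; lra| apply Rinv_lt_contravar; lra]). lra. }
  set (E := exp (INR d / c * ln t)). assert (HE : 0 < E) by apply exp_pos.
  set (K := (/ INR d) ^ n). assert (HK : 0 <= K) by (apply pow_le; left; apply Rinv_0_lt_compat; auto).
  set (F := tuples n (2 * d)).
  set (G := fun (be : nat -> bool) (tt : list nat) =>
    Defs.ind (INR (distn d be (wf r1 x0 l (L (map (atom0 x0 l) tt)))) <= INR d / c) * K).
  assert (H1 : forall be, 1 - delta <= sumR (map (fun tt => G be tt) F)).
  { intros be. apply (per_beta S B x0 l r1 r2 e1 e2 c delta n L be Hd); auto; lra. }
  assert (Hsum : 2 ^ d * (1 - delta) <= 2 ^ n * (1 + t) ^ d * / E).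
  { apply Rle_trans with (sumR (map (fun be => sumR (map (fun tt => G be tt) F)) (allf d))).
    { replace (2 ^ d * (1 - delta)) with (sumR (map (fun _ => 1 - delta) (allf d))).
      - apply sumR_map_le. intros; auto.
      - rewrite sumR_map_const, allf_len, pow_INR. simpl INR. replace (1 + 1) with 2 by lra. reflexivity. }
    rewrite sumR_swap.
    apply Rle_trans with (sumR (map (fun _ => K * / E * (1 + t) ^ d) F)).
    { apply sumR_map_le. intros tt _.
      rewrite <- (allf_pow d (wf r1 x0 l (L (map (atom0 x0 l) tt))) t), <- sumR_map_scal.
      apply sumR_map_le. intros be _. unfold G.
      pose proof (ind_pow (distn d be (wf r1 x0 l (L (map (atom0 x0 l) tt)))) (INR d / c) t Ht).
      fold E in H. nra. }
    rewrite sumR_map_const. unfold F. rewrite tuples_len, pow_INR, mult_INR. simpl (INR 2).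
    assert (HP : (1 + 1) ^ n = ((1 + 1) * INR d) ^ n * K).
    { unfold K. rewrite <- Rpow_mult_distr. f_equal. field. lra. }
    apply Req_le. rewrite <- Rmult_assoc, <- Rmult_assoc, <- HP. replace (1 + 1) with 2 by lra. ring. }
  assert (Hln : ln (2 ^ d * (1 - delta)) <= ln (2 ^ n * (1 + t) ^ d * / E)).
  { apply ln_le; auto. apply Rmult_lt_0_compat; [apply pow_lt|]; lra. }
  rewrite ln_mult, ln_pow in Hln by (try apply pow_lt; lra).
  rewrite ln_mult, ln_mult, ln_pow, ln_pow, ln_Rinv in Hln
    by (try apply pow_lt; try apply Rmult_lt_0_compat; try apply pow_lt; try apply Rinv_0_lt_compat; lra).
  unfold E in Hln. rewrite ln_exp in Hln.
  unfold log2, Cc. fold t.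
  apply Rmult_le_reg_r with (ln 2); auto.
  replace ((ln (1 - delta) / ln 2 + (ln 2 - ln (1 + t) + ln t / c) / ln 2 * INR d) * ln 2)
    with (ln (1 - delta) + (ln 2 - ln (1 + t)) * INR d + INR d / c * ln t) by (field; lra).
  lra. Qed.

Lemma ser_lim a l : is_series a l -> is_lim_seq (sum_n a) l.
Proof. intros H; exact H. Qed.

Lemma ex_dom (h w : nat -> R) M : ex_series w -> (forall i, Rabs (h i) <= M * w i) -> ex_series h.
Proof. intros Hw H. apply ex_series_Rabs. apply (@ex_series_le R_AbsRing R_CompleteNormedModule _ (fun i => M * w i)).
  - intros n. change (norm (Rabs (h n))) with (Rabs (Rabs (h n))). rewrite Rabs_Rabsolu. auto.
  - exact (ex_series_scal_l M w Hw). Qed.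

Lemma ex_scal c a : ex_series a -> ex_series (fun n => c * a n).
Proof. intros H. exact (ex_series_scal_l c a H). Qed.

Lemma ex_minus a b : ex_series a -> ex_series b -> ex_series (fun n => a n - b n).
Proof. intros Ha Hb. exact (ex_series_minus a b Ha Hb). Qed.

Lemma ex_ext (a b : nat -> R) : (forall n, a n = b n) -> ex_series a -> ex_series b.
Proof. apply ex_series_ext. Qed.

Lemma Series_zero : Series (fun _ : nat => 0) = 0.
Proof. rewrite (Series_fin _ 0); auto. Qed.

Lemma Series_mono a b : ex_series a -> ex_series b -> (forall n, a n <= b n) -> Series a <= Series b.
Proof. intros Ha Hb H.
  assert (0 <= Series (fun n => b n - a n)).
  { rewrite <- Series_zero. apply Series_le.
    - intros n; specialize (H n); lra.
    - exact (ex_series_minus b a Hb Ha). }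
  rewrite Series_minus in H0; auto. lra. Qed.

Lemma ex_series_fsum N (h : nat -> nat -> R) : (forall k, ex_series (h k)) ->
  ex_series (fun i => fsum N (fun k => h k i)).
Proof. intros H. induction N.
  - exists 0. apply (series_fin _ 0). intros; reflexivity.
  - apply (ex_series_ext (fun i => fsum N (fun k => h k i) + h N i)).
    + intros; rewrite fsum_S; reflexivity.
    + exact (ex_series_plus _ _ IHN (H N)). Qed.

Lemma fsum_Series N (h : nat -> nat -> R) : (forall k, ex_series (h k)) ->
  fsum N (fun k => Series (h k)) = Series (fun i => fsum N (fun k => h k i)).
Proof. intros H. induction N.
  - rewrite fsum_0. symmetry. rewrite <- Series_zero. apply Series_ext. intros; reflexivity.
  - rewrite fsum_S, IHN. rewrite <- Series_plus; auto.
    + apply Series_ext. intros; rewrite fsum_S; reflexivity.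
    + apply ex_series_fsum; auto. Qed.

Lemma fsum_ind_unique N (P : nat -> Prop) : (forall k k', P k -> P k' -> k = k') ->
  fsum N (fun k => Defs.ind (P k)) = Defs.ind (exists k, (k < N)%nat /\ P k).
Proof. intros U. induction N.
  - rewrite fsum_0. unfold Defs.ind. destruct excluded_middle_informative as [[k [Hk _]]|]; [lia|lra].
  - rewrite fsum_S, IHN. unfold Defs.ind.
    destruct (excluded_middle_informative (P N)) as [HP|HP];
    destruct (excluded_middle_informative (exists k, (k < N)%nat /\ P k)) as [H1|H1];
    destruct (excluded_middle_informative (exists k, (k < S N)%nat /\ P k)) as [H2|H2]; try lra.
    + destruct H1 as [k [Hk Pk]]. specialize (U _ _ HP Pk). lia.
    + destruct H1 as [k [Hk Pk]]. specialize (U _ _ HP Pk). lia.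
    + exfalso; apply H2; exists N; split; auto.
    + exfalso; apply H2. destruct H1 as [k [Hk Pk]]. exists k; split; auto.
    + exfalso. destruct H2 as [k [Hk Pk]]. destruct (Nat.eq_dec k N); [subst; tauto|].
      apply H1; exists k; split; auto; lia. Qed.

Definition firstp (Fi : nat -> R) (k : nat) : Prop := forall j, (j < k)%nat -> Fi j <> Fi k.

Lemma first_exists (Fi : nat -> R) i : exists k, (k <= i)%nat /\ firstp Fi k /\ Fi i = Fi k.
Proof. induction i as [i IH] using lt_wf_ind.
  destruct (classic (firstp Fi i)) as [H|H].
  - exists i. auto.
  - unfold firstp in H. apply not_all_ex_not in H. destruct H as [j H].
    apply imply_to_and in H. destruct H as [Hj H]. apply NNPP in H.
    destruct (IH j Hj) as [k [Hk [Fk E]]]. exists k. split; [lia|]. split; auto. congruence. Qed.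

Lemma first_unique (Fi : nat -> R) i k k' : firstp Fi k /\ Fi i = Fi k -> firstp Fi k' /\ Fi i = Fi k' -> k = k'.
Proof. intros [F1 E1] [F2 E2]. destruct (lt_eq_lt_dec k k') as [[L|L]|L]; auto.
  - exfalso. apply (F2 k L). congruence.
  - exfalso. apply (F1 k' L). congruence. Qed.

Lemma ind_and P Q : Defs.ind P * Defs.ind Q = Defs.ind (P /\ Q).
Proof. unfold Defs.ind. repeat destruct excluded_middle_informative; tauto || lra. Qed.

Lemma wbound w a b : 0 <= w -> 0 <= a <= 1 -> 0 <= b <= 2 -> w * (a * b) <= 2 * w.
Proof. intros. replace (2 * w) with (w * (1 * 2)) by ring. apply Rmult_le_compat_l; [lra|].
  apply Rmult_le_compat; lra. Qed.

Lemma wbound2 w a b : 0 <= w -> 0 <= a <= 1 -> 0 <= b <= 2 -> w * (a * b) <= 2 * (w * a).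
Proof. intros. replace (2 * (w * a)) with (w * (a * 2)) by ring. apply Rmult_le_compat_l; [lra|].
  apply Rmult_le_compat_l; lra. Qed.

Lemma core_seq (w Fi : nat -> R) (gs : bool -> nat -> R) (sigma : bool) :
  (forall i, 0 <= w i) -> is_series w 1 -> (forall s i, Rabs (gs s i) <= 2) ->
  Series (fun i => w i * gs sigma i) <=
  Series (fun k => Defs.ind (firstp Fi k) *
     Rmax (Series (fun i => w i * (Defs.ind (Fi i = Fi k) * gs true i)))
          (Series (fun i => w i * (Defs.ind (Fi i = Fi k) * gs false i)))).
Proof. intros Hw Hs Hg.
  assert (Hws : ex_series w) by (exists 1; auto).
  set (Pk := fun i k => firstp Fi k /\ Fi i = Fi k).
  assert (HI : forall P, 0 <= Defs.ind P <= 1) by (intros; unfold Defs.ind; destruct excluded_middle_informative; lra).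
  assert (Hdom : forall (c : nat -> R), (forall i, Rabs (c i) <= 2) -> ex_series (fun i => w i * c i)).
  { intros cc Hc. apply ex_dom with w 2; auto. intros i. rewrite Rabs_mult, Rabs_pos_eq by auto.
    specialize (Hc i). specialize (Hw i). nra. }
  assert (Hdom2 : forall P s, ex_series (fun i => w i * (Defs.ind (P i) * gs s i))).
  { intros P s. apply Hdom. intros i. rewrite Rabs_mult. specialize (HI (P i)). rewrite (Rabs_pos_eq (Defs.ind _)) by lra.
    specialize (Hg s i). pose proof (Rabs_pos (gs s i)). nra. }
  set (E := fun s k => Series (fun i => w i * (Defs.ind (Fi i = Fi k) * gs s i))).
  set (T := fun k => Defs.ind (firstp Fi k) * Rmax (E true k) (E false k)).
  set (W := fun k => 2 * Series (fun i => w i * Defs.ind (Pk i k))).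
  assert (HEb : forall s k, Rabs (E s k) <= 2 * Series (fun i => w i * Defs.ind (Fi i = Fi k))).
  { intros s k. unfold E. eapply Rle_trans; [apply Series_Rabs|].
    - apply ex_dom with w 2; auto. intros i. rewrite Rabs_Rabsolu, Rabs_mult, Rabs_pos_eq by auto.
      rewrite Rabs_mult. specialize (HI (Fi i = Fi k)). rewrite (Rabs_pos_eq (Defs.ind _)) by lra.
      specialize (Hg s i). specialize (Hw i). pose proof (Rabs_pos (gs s i)). apply wbound; lra.
    - rewrite <- Series_scal_l. apply Series_le.
      + intros i. split; [apply Rabs_pos|]. rewrite !Rabs_mult, Rabs_pos_eq by auto.
        specialize (HI (Fi i = Fi k)). rewrite (Rabs_pos_eq (Defs.ind _)) by lra.
        specialize (Hg s i). specialize (Hw i). pose proof (Rabs_pos (gs s i)). apply wbound2; lra.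
      + apply ex_scal. apply Hdom. intros i. specialize (HI (Fi i = Fi k)).
        rewrite Rabs_pos_eq by lra. lra. }
  assert (HTW : forall k, Rabs (T k) <= W k).
  { intros k. unfold T, W. rewrite Rabs_mult. specialize (HI (firstp Fi k)).
    rewrite (Rabs_pos_eq (Defs.ind _)) by lra.
    assert (Rabs (Rmax (E true k) (E false k)) <= 2 * Series (fun i => w i * Defs.ind (Fi i = Fi k))).
    { pose proof (HEb true k). pose proof (HEb false k). unfold Rmax. destruct Rle_dec; auto. }
    assert (Series (fun i => w i * Defs.ind (Pk i k)) = Defs.ind (firstp Fi k) * Series (fun i => w i * Defs.ind (Fi i = Fi k))).
    { rewrite <- Series_scal_l. apply Series_ext. intros i. unfold Pk. rewrite <- ind_and. ring. }
    rewrite H0. pose proof (Rabs_pos (Rmax (E true k) (E false k))). nra. }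
  assert (HQ : forall N i, fsum N (fun k => Defs.ind (Pk i k)) = Defs.ind (exists k, (k < N)%nat /\ Pk i k)).
  { intros N i. apply fsum_ind_unique. intros k k'. apply first_unique. }
  assert (HexP : forall k, ex_series (fun i => w i * Defs.ind (Pk i k))).
  { intros k. apply Hdom. intros i. specialize (HI (Pk i k)). rewrite Rabs_pos_eq by lra. lra. }
  assert (HWs : ex_series W).
  { assert (Hpart : forall N, sum_n W N <= 2).
    { intros N. rewrite sum_n_fsum. unfold W. rewrite fsum_scal, fsum_Series by auto.
      assert (Series (fun i => fsum (S N) (fun k => w i * Defs.ind (Pk i k))) <= Series w).
      { apply Series_le; auto. intros i. rewrite fsum_scal, HQ. specialize (HI (exists k, (k < S N)%nat /\ Pk i k)).
        specialize (Hw i). nra. }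
      rewrite (is_series_unique w 1) in H; auto. lra. }
    assert (HWp : forall k, 0 <= W k).
    { intros k. unfold W. assert (0 <= Series (fun i => w i * Defs.ind (Pk i k))); [|lra].
      rewrite <- Series_zero. apply Series_le; auto.
      intros i. specialize (HI (Pk i k)). specialize (Hw i). nra. }
    destruct (ex_finite_lim_seq_incr (sum_n W) 2) as [l Hl]; auto.
    - intros n. rewrite sum_Sn. specialize (HWp (S n)). change (plus (sum_n W n) (W (S n))) with (sum_n W n + W (S n)). lra.
    - exists l. exact Hl. }
  assert (HTs : ex_series T).
  { apply ex_series_Rabs. apply (@ex_series_le R_AbsRing R_CompleteNormedModule _ W); auto. intros n. change (norm (Rabs (T n))) with (Rabs (Rabs (T n))).
    rewrite Rabs_Rabsolu; auto. }
  assert (Hpart : forall N, Series (fun i => w i * gs sigma i) - 2 * (1 - sum_n w N) <= sum_n T N).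
  { intros N.
    assert (HA : sum_n (fun k => Series (fun i => w i * Defs.ind (Pk i k) * gs sigma i)) N <= sum_n T N).
    { rewrite !sum_n_fsum. apply fsum_le. intros k _.
      replace (Series (fun i => w i * Defs.ind (Pk i k) * gs sigma i)) with (Defs.ind (firstp Fi k) * E sigma k).
      - unfold T. specialize (HI (firstp Fi k)). apply Rmult_le_compat_l; [lra|].
        destruct sigma; [apply Rmax_l|apply Rmax_r].
      - unfold E. rewrite <- Series_scal_l. apply Series_ext. intros i. unfold Pk. rewrite <- ind_and. ring. }
    eapply Rle_trans; [|exact HA]. rewrite (sum_n_fsum (fun k => Series _)).
    rewrite (fsum_Series (S N) (fun k i => w i * Defs.ind (Pk i k) * gs sigma i)).
    2:{ intros k. apply (ex_ext (fun i => w i * (Defs.ind (Pk i k) * gs sigma i))); [intros; ring|apply Hdom2]. }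
    assert (HR : Series (fun i => fsum (S N) (fun k => w i * Defs.ind (Pk i k) * gs sigma i))
       = Series (fun i => w i * (Defs.ind (exists k, (k < S N)%nat /\ Pk i k) * gs sigma i))).
    { apply Series_ext. intros i.
      transitivity (fsum (S N) (fun k => (w i * gs sigma i) * Defs.ind (Pk i k))); [apply fsum_ext; intros; ring|].
      rewrite fsum_scal, <- HQ. ring. }
    rewrite HR.
    assert (Hfin : Series (fun i => w i * (if le_dec i N then 1 else 0)) = sum_n w N).
    { rewrite sum_n_fsum, (Series_fin _ (S N)).
      - apply fsum_ext. intros j Hj. destruct (le_dec j N); [ring|lia].
      - intros k Hk. destruct (le_dec k N); [lia|ring]. }
    assert (Hexf : ex_series (fun i => w i * (if le_dec i N then 1 else 0))).
    { apply Hdom. intros i. destruct (le_dec i N); rewrite ?Rabs_R1, ?Rabs_R0; lra. }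
    assert (Hmain : Series (fun i => w i * gs sigma i) - Series (fun i => w i * (Defs.ind (exists k, (k < S N)%nat /\ Pk i k) * gs sigma i))
        <= 2 * (Series w - Series (fun i => w i * (if le_dec i N then 1 else 0)))).
    { rewrite <- !Series_minus, <- Series_scal_l; auto.
      apply Series_mono.
      - apply ex_minus; [apply (Hdom _ (Hg sigma))|apply (Hdom2 (fun i => exists k, (k < S N)%nat /\ Pk i k) sigma)].
      - apply ex_scal. apply ex_minus; auto.
      - intros i. destruct (le_dec i N) as [Hi|Hi].
        + assert (Defs.ind (exists k, (k < S N)%nat /\ Pk i k) = 1).
          { unfold Defs.ind. destruct excluded_middle_informative as [_|Hn]; auto. exfalso; apply Hn.
            destruct (first_exists Fi i) as [k [Hk Pki]]. exists k. split; [lia|exact Pki]. }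
          rewrite H. lra.
        + specialize (HI (exists k, (k < S N)%nat /\ Pk i k)). specialize (Hg sigma i). specialize (Hw i).
          apply Rabs_le_between in Hg.
          assert (0 <= w i * (1 - Defs.ind (exists k, (k < S N)%nat /\ Pk i k))) by nra.
          replace (w i * gs sigma i - w i * (Defs.ind (exists k, (k < S N)%nat /\ Pk i k) * gs sigma i))
            with (w i * (1 - Defs.ind (exists k, (k < S N)%nat /\ Pk i k)) * gs sigma i) by ring.
          nra. }
    rewrite Hfin, (is_series_unique w 1) in Hmain by auto. lra. }
  pose proof (Series_correct T HTs) as HT. apply ser_lim in HT.
  assert (HL : is_lim_seq (fun N => Series (fun i => w i * gs sigma i) - 2 * (1 - sum_n w N))
      (Series (fun i => w i * gs sigma i) - 2 * (1 - 1))).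
  { apply is_lim_seq_minus'. apply is_lim_seq_const.
    apply (is_lim_seq_scal_l (fun N => 1 - sum_n w N) 2 (1 - 1)).
    apply is_lim_seq_minus'. apply is_lim_seq_const. apply ser_lim; auto. }
  pose proof (is_lim_seq_le _ _ _ _ Hpart HL HT) as Hle. simpl in Hle. unfold T, E in Hle. lra. Qed.

Lemma diamond_ind u P s bb : diamond (u * Defs.ind P * s) bb = Defs.ind P * diamond (u * s) bb.
Proof. unfold Defs.ind. destruct excluded_middle_informative; destruct bb as [v|]; simpl.
  - ring.
  - replace (u * 1 * s) with (u * s) by ring. ring.
  - ring.
  - replace (u * 0 * s) with 0 by ring. rewrite Rabs_R0. ring. Qed.

Lemma diamond_bound u bb : (forall v, bb = Some v -> -1 <= v <= 1) -> Rabs (diamond u bb) <= Rabs u.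
Proof. intros H. destruct bb as [v|]; simpl.
  - rewrite Rabs_mult. specialize (H v eq_refl). pose proof (Rabs_pos u).
    assert (Rabs v <= 1) by (apply Rabs_le; lra). nra.
  - rewrite Rabs_Ropp, Rabs_Rabsolu. lra. Qed.

Lemma MC_MA {X} (mu : Defs.dist X) (B : hclass X) f eps : valued B -> (forall x, -1 <= f x <= 1) ->
  MC_err_le mu B f eps -> MA_err_le mu B f eps.
Proof. intros HvB Hf H b Hb sigma. specialize (H b Hb). unfold Ex.
  set (Fi := fun i => f (fst (atom mu i))).
  set (gs := fun s i => diamond ((f (fst (atom mu i)) - snd (atom mu i)) * sgnb s) (b (fst (atom mu i)))).
  change (Series (fun i => wt mu i * gs sigma i) <= eps).
  eapply Rle_trans; [apply (core_seq (wt mu) Fi gs sigma)| ].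
  - apply wt_nonneg.
  - apply wt_sum.
  - intros s i. unfold gs. eapply Rle_trans; [apply diamond_bound; intros v Hv; exact (HvB b Hb _ _ Hv)|].
    rewrite Rabs_mult. assert (Rabs (sgnb s) = 1) by (destruct s; simpl; rewrite ?Rabs_R1, ?Rabs_m1; auto).
    rewrite H0, Rmult_1_r. pose proof (atom_y _ mu i). specialize (Hf (fst (atom mu i))).
    apply Rabs_le. lra.
  - eapply Rle_trans; [|exact H]. apply Req_le. apply Series_ext. intros k. f_equal.
    unfold MC_term, Ex. f_equal; apply Series_ext; intros i; unfold gs, Fi; rewrite diamond_ind; reflexivity. Qed.

Lemma prodR_nonneg (w : nat -> R) t : (forall i, 0 <= w i) -> 0 <= prodR (map w t).
Proof. intros H. induction t; simpl; [lra|]. specialize (H a). nra. Qed.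

Lemma MC_MA_learner {X} (S B : hclass X) eps delta n L : valued B ->
  MC_learner S B eps delta n L -> MA_learner S B eps delta n L.
Proof. intros HvB [Hb [_ H]]. split; auto. intros mu Hr F HF Hl.
  eapply Rle_trans; [|apply (H mu Hr F HF Hl)]. apply sumR_map_le. intros t _.
  pose proof (prodR_nonneg (wt mu) t (wt_nonneg _ mu)).
  apply Rmult_le_compat_r; auto. unfold Defs.ind.
  destruct excluded_middle_informative as [A1|A1]; destruct excluded_middle_informative as [A2|A2]; try lra.
  exfalso. apply A1. apply MC_MA; auto. apply NNPP; auto. Qed.

Lemma sharp_le {X} (S B : hclass X) eps delta : valued B ->
  Rbar_le (sharpMA S B eps delta) (sharpMC S B eps delta).
Proof. intros HvB. unfold sharpMA, sharpMC, least.
  destruct (Glb_Rbar_correct (fun r => exists n, (exists L, MA_learner S B eps delta n L) /\ r = INR n)) as [H1 _].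
  destruct (Glb_Rbar_correct (fun r => exists n, (exists L, MC_learner S B eps delta n L) /\ r = INR n)) as [_ H2].
  apply H2. intros x [n [[L HL] Hx]]. rewrite Hx. apply H1. exists n. split; auto. exists L. apply MC_MA_learner; auto. Qed.

Lemma lub_ub (E : Rbar -> Prop) x : E x -> Rbar_le x (Rbar_lub E).
Proof. intros H. unfold Rbar_lub. destruct (proj2_sig (Rbar_ex_lub E)) as [Hl _]. apply Hl; auto. Qed.

Lemma lub_le (E : Rbar -> Prop) b : (forall x, E x -> Rbar_le x b) -> Rbar_le (Rbar_lub E) b.
Proof. intros H. unfold Rbar_lub. destruct (proj2_sig (Rbar_ex_lub E)) as [_ Hl]. apply Hl; auto. Qed.

Lemma sh_fat {X} (H : hclass X) r eta l : shatters (thrcls H r eta) l ->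
  forall xi : X -> bool, exists h, H h /\
    forall x, In x l -> exists v, h x = Some v /\ sgnb (xi x) * (v - r x) > eta.
Proof. intros Hs xi. destruct (Hs xi) as [g [[h [Hh ->]] Hg]]. exists h. split; auto.
  intros x Hx. destruct (thr_some _ _ _ _ _ (Hg x Hx)) as [u [E P]]. exists u. split; auto.
  destruct (xi x); simpl; lra. Qed.

Lemma fat_sh {X} (H : hclass X) r eta l : 0 < eta ->
  (forall xi : X -> bool, exists h, H h /\
    forall x, In x l -> exists v, h x = Some v /\ sgnb (xi x) * (v - r x) > eta) ->
  shatters (thrcls H r eta) l.
Proof. intros He Hs xi. destruct (Hs xi) as [h [Hh Hx]]. exists (thr r eta h). split.
  - exists h; auto.
  - intros x Hin. destruct (Hx x Hin) as [v [E P]]. unfold thr. rewrite E.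
    destruct (xi x); simpl in P;
    destruct (Rlt_dec (r x + eta) v); try destruct (Rlt_dec v (r x - eta)); try reflexivity; lra. Qed.

Lemma mVC_fat {X} (S B : hclass X) eta : 0 < eta -> mVC S B eta eta = fat eta S B.
Proof. intros He. apply Rbar_le_antisym.
  - apply lub_le. intros z [r1 [r2 ->]]. apply lub_le. intros y [l [Hn [H1 [H2 ->]]]].
    apply lub_ub. exists l. split; auto. split; [exists r1; apply sh_fat; auto|].
    split; [exists r2; apply sh_fat; auto|reflexivity].
  - apply lub_le. intros y [l [Hn [[r1 H1] [[r2 H2] ->]]]].
    apply Rbar_le_trans with (VC2 (thrcls S r1 eta) (thrcls B r2 eta)).
    + apply lub_ub. exists l. split; auto. split; [apply fat_sh; auto|]. split; [apply fat_sh; auto|reflexivity].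
    + apply lub_ub. exists r1, r2. reflexivity. Qed.

Lemma lower {X} (S B : hclass X) (x0 : X) e1 e2 c delta : valued S -> 0 < e1 -> 0 < e2 -> 2 < c ->
  0 < delta < 1 ->
  Rbar_le (Rbar_plus (Finite (log2 (1 - delta))) (Rbar_mult (Finite (Cc c)) (mVC S B e1 e2)))
          (sharpMA S B (e1 * e2 / c) delta).
Proof. intros HvS He1 He2 Hc Hd. pose proof (Cc_pos c Hc) as HC.
  unfold sharpMA, least.
  destruct (Glb_Rbar_correct (fun r => exists n, (exists L, MA_learner S B (e1 * e2 / c) delta n L) /\ r = INR n)) as [_ Hg].
  apply Hg. intros y [n [[L HL] Hy]]. rewrite Hy. clear y Hy.
  set (M := (INR n - log2 (1 - delta)) / Cc c).
  assert (Hm : Rbar_le (mVC S B e1 e2) (Finite M)).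
  { apply lub_le. intros z [r1 [r2 ->]]. apply lub_le. intros y [l [Hn [H1 [H2 ->]]]].
    simpl. pose proof (core S B x0 l r1 r2 e1 e2 c delta n L HvS Hn He1 He2 Hc Hd H1 H2 HL).
    unfold M. apply Rmult_le_reg_l with (Cc c); auto.
    replace (Cc c * ((INR n - log2 (1 - delta)) / Cc c)) with (INR n - log2 (1 - delta)) by (field; lra).
    lra. }
  destruct (mVC S B e1 e2) as [m| |]; simpl in Hm.
  - simpl. unfold M in Hm.
    assert (Cc c * m <= INR n - log2 (1 - delta)).
    { replace (INR n - log2 (1 - delta)) with (Cc c * ((INR n - log2 (1 - delta)) / Cc c)) by (field; lra).
      apply Rmult_le_compat_l; lra. }
    lra.
  - contradiction.
  - unfold Rbar_mult, Rbar_mult'. destruct (Rle_dec 0 (Cc c)) as [H|H];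
      [destruct (Rle_lt_or_eq_dec 0 (Cc c) H) as [H'|H']|]; simpl; auto; lra. Qed.

Theorem theorem5p5 :
  forall c : R, 2 < c ->
  exists C : R, 0 < C /\
  (forall (X : Type) (S B : hclass X), inhabited X -> valued S -> valued B ->
   forall eta1 eta2 delta : R, 0 < eta1 -> 0 < eta2 -> 0 < delta < 1 ->
     Rbar_le (sharpMA S B (eta1 * eta2 / c) delta) (sharpMC S B (eta1 * eta2 / c) delta) /\
     Rbar_le (Rbar_plus (Finite (log2 (1 - delta))) (Rbar_mult (Finite C) (mVC S B eta1 eta2)))
             (sharpMA S B (eta1 * eta2 / c) delta)) /\
  (forall (X : Type) (S B : hclass X), inhabited X -> valued S -> valued B ->
   forall eps delta : R, 0 < eps < 1/2 -> 0 < delta < 1 ->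
     mVC S B (sqrt (c * eps)) (sqrt (c * eps)) = fat (sqrt (c * eps)) S B /\
     Rbar_le (sharpMA S B eps delta) (sharpMC S B eps delta) /\
     Rbar_le (Rbar_plus (Finite (log2 (1 - delta)))
                        (Rbar_mult (Finite C) (mVC S B (sqrt (c * eps)) (sqrt (c * eps)))))
             (sharpMA S B eps delta)).
Proof. intros c Hc. exists (Cc c). split; [apply Cc_pos; auto|]. split.
  - intros X S B HX HvS HvB e1 e2 delta He1 He2 Hd. destruct HX as [x0].
    split; [apply sharp_le; auto|apply lower; auto].
  - intros X S B HX HvS HvB eps delta He Hd. destruct HX as [x0].
    assert (Hce : 0 < c * eps) by nra.
    assert (Hs : 0 < sqrt (c * eps)) by (apply sqrt_lt_R0; auto).
    assert (Heq : sqrt (c * eps) * sqrt (c * eps) / c = eps) by (rewrite sqrt_sqrt by lra; field; lra).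
    pose proof (lower S B x0 (sqrt (c * eps)) (sqrt (c * eps)) c delta HvS Hs Hs Hc Hd) as Hl.
    rewrite Heq in Hl.
    split; [apply mVC_fat; auto|]. split; [apply sharp_le; auto|exact Hl]. Qed.
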